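(* Let $d\in C^1(\mathbb{R})$ with $d(0)=0$, $d'(m)>d_0$ and $|d'(m)|\le d_1+d_2|m|^p$ for all $m\in\mathbb{R}$, for constants $d_0>0$, $d_1,d_2,p\ge0$. Let $\bar f,\bar g\in L^2(0,1)$, $\bar h=(\bar h(0),\bar h(1))\in\mathbb{R}^2$, $T>0$, and let $(p,m)$ be a smooth solution on $(0,1)\times[0,T]$ of $$\partial_t p+\partial_x m=\bar f,\qquad \partial_t m+\partial_x p+d(m)=\bar g\quad\text{in }(0,1)\times[0,T],\qquad p(x,t)=\bar h(x)\ \text{for }x\in\{0,1\},\ t\in[0,T].$$ Then for all $t\in[0,T]$, $$\|\partial_t p(t)\|_{L^2}+\|\partial_t m(t)\|_{L^2}+\|m(t)\|_{H^1}\le c,$$ where the constant $c$ depends only on $\|\bar f\|_{L^2},\|\bar g\|_{L^2},|\bar h|_1,\|p(0)\|_{H^1},\|m(0)\|_{H^1}$, and not on $t$ or $T$.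
   Context: $p(t)$, $m(t)$ denote the functions $x\mapsto p(x,t)$, $x\mapsto m(x,t)$. $|\bar h|_1=|\bar h(0)|+|\bar h(1)|$. The conditions on $d$ are the paper's standing assumption on the damping function in this system. *)

(* Defs.v *)
From Stdlib Require Import Reals.
From Coquelicot Require Import Coquelicot.
Open Scope R_scope.

(* |x|^q for real exponent q >= 0, with the convention 0^q = 0 (q>0), 0^0 = 1. *)
Definition rpow (x q : R) : R :=
  if Req_EM_T x 0 then (if Req_EM_T q 0 then 1 else 0) else Rpower x q.

Fixpoint Ck2 (k : nat) (u : R -> R -> R) : Prop :=
  (forall z : R * R, continuous (fun w : R * R => u (fst w) (snd w)) z) /\
  match k with
  | O => True
  | S k' =>
      (forall x t, ex_derive (fun y => u y t) x) /\
      (forall x t, ex_derive (fun s => u x s) t) /\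
      Ck2 k' (fun x t => Derive (fun y => u y t) x) /\
      Ck2 k' (fun x t => Derive (fun s => u x s) t)
  end.

Definition smooth2 (u : R -> R -> R) : Prop := forall k, Ck2 k u.

Definition dx (u : R -> R -> R) (x t : R) : R := Derive (fun y => u y t) x.
Definition dt (u : R -> R -> R) (x t : R) : R := Derive (fun s => u x s) t.

Definition L2norm (f : R -> R) : R := sqrt (RInt (fun x => (f x)^2) 0 1).
Definition H1norm (f : R -> R) : R :=
  sqrt (RInt (fun x => (f x)^2 + (Derive f x)^2) 0 1).

(* Main.v *)
Require Import Defs.
From Stdlib Require Import Reals Lra.
From Coquelicot Require Import Coquelicot.
Open Scope R_scope.

Definition J (f : R -> R -> R) :=
  forall z : R * R, continuous (fun w : R * R => f (fst w) (snd w)) z.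

Lemma cR_plus (f g : R -> R) x : continuous f x -> continuous g x ->
  continuous (fun y => f y + g y) x.
Proof. intros; exact (continuous_plus f g x H H0). Qed.
Lemma cR_minus (f g : R -> R) x : continuous f x -> continuous g x ->
  continuous (fun y => f y - g y) x.
Proof. intros; exact (continuous_minus f g x H H0). Qed.
Lemma cR_mult (f g : R -> R) x : continuous f x -> continuous g x ->
  continuous (fun y => f y * g y) x.
Proof. intros; exact (continuous_mult f g x H H0). Qed.
Lemma cR_opp (f : R -> R) x : continuous f x -> continuous (fun y => - f y) x.
Proof. intros; exact (continuous_opp f x H). Qed.
Lemma cR_pow2 (f : R -> R) x : continuous f x -> continuous (fun y => f y ^ 2) x.
Proof. intros. apply continuous_ext with (f := fun y => f y * f y).
  intros; simpl; ring. apply cR_mult; auto. Qed.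
Lemma cR_const (c x : R) : continuous (fun _ : R => c) x.
Proof. apply continuous_const. Qed.
Lemma cR_abs (f : R -> R) x : continuous f x -> continuous (fun y => Rabs (f y)) x.
Proof. intros. apply (continuous_comp f Rabs). auto.
  apply continuity_pt_filterlim. apply Rcontinuity_abs. Qed.

Ltac cont1 := match goal with
  | |- continuous (fun _ => ?c) _ => apply cR_const
  | |- continuous (fun y => @?a y + @?b y) _ => apply (cR_plus a b)
  | |- continuous (fun y => @?a y - @?b y) _ => apply (cR_minus a b)
  | |- continuous (fun y => @?a y * @?b y) _ => apply (cR_mult a b)
  | |- continuous (fun y => - @?a y) _ => apply (cR_opp a)
  | |- continuous (fun y => @?a y ^ 2) _ => apply (cR_pow2 a)
  | |- continuous (fun y => Rabs (@?a y)) _ => apply (cR_abs a)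
  end.
Ltac cont := repeat (cont1; cbv beta).

Lemma J_x f s x : J f -> continuous (fun y => f y s) x.
Proof.
  intros H.
  apply (continuous_comp_2 (fun y => y) (fun _ => s) f).
  apply continuous_id. apply continuous_const. apply H.
Qed.
Lemma J_t f x s : J f -> continuous (fun y => f x y) s.
Proof.
  intros H.
  apply (continuous_comp_2 (fun _ => x) (fun y => y) f).
  apply continuous_const. apply continuous_id. apply H.
Qed.
Lemma J_c2d f x y : J f -> continuity_2d_pt f x y.
Proof. intros H. apply continuity_2d_pt_filterlim. apply (H (x,y)). Qed.
Lemma c2d_swap f x y : continuity_2d_pt f x y -> continuity_2d_pt (fun a b => f b a) y x.
Proof.
  intros H eps. destruct (H eps) as [dl Hd]. exists dl. intros u v Hu Hv. apply Hd; auto.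
Qed.

Lemma C2 u : Ck2 2 u ->
  J u /\ J (dx u) /\ J (dt u) /\ J (dx (dx u)) /\ J (dt (dx u)) /\ J (dx (dt u))
  /\ J (dt (dt u))
  /\ (forall x t, ex_derive (fun y => u y t) x)
  /\ (forall x t, ex_derive (fun s => u x s) t)
  /\ (forall x t, ex_derive (fun y => dx u y t) x)
  /\ (forall x t, ex_derive (fun s => dx u x s) t)
  /\ (forall x t, ex_derive (fun y => dt u y t) x)
  /\ (forall x t, ex_derive (fun s => dt u x s) t).
Proof.
  simpl. unfold J, dx, dt. intuition.
Qed.

Lemma RInt_plusR (f g : R -> R) a b : ex_RInt f a b -> ex_RInt g a b ->
  RInt (fun x => f x + g x) a b = RInt f a b + RInt g a b.
Proof. intros; exact (RInt_plus f g a b H H0). Qed.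
Lemma RInt_minusR (f g : R -> R) a b : ex_RInt f a b -> ex_RInt g a b ->
  RInt (fun x => f x - g x) a b = RInt f a b - RInt g a b.
Proof. intros; exact (RInt_minus f g a b H H0). Qed.
Lemma RInt_scalR (f : R -> R) a b k : ex_RInt f a b ->
  RInt (fun x => k * f x) a b = k * RInt f a b.
Proof. intros; exact (RInt_scal f a b k H). Qed.
Lemma RInt_constR (c : R) : RInt (fun _ => c) 0 1 = c.
Proof. rewrite RInt_const. unfold scal; simpl; unfold mult; simpl. ring. Qed.

Lemma exR (f : R -> R) : (forall x, 0 <= x <= 1 -> continuous f x) -> ex_RInt f 0 1.
Proof.
  intros H. apply (ex_RInt_continuous (V:=R_CompleteNormedModule)). intros z Hz.
  rewrite Rmin_left in Hz by lra. rewrite Rmax_right in Hz by lra. auto.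
Qed.


Lemma exAB (f : R -> R) a b : a <= b -> (forall x, a <= x <= b -> continuous f x) -> ex_RInt f a b.
Proof.
  intros Hab H. apply (ex_RInt_continuous (V:=R_CompleteNormedModule)). intros z Hz.
  rewrite Rmin_left in Hz by lra. rewrite Rmax_right in Hz by lra. auto.
Qed.

Lemma RInt_mono_sub (g : R -> R) a b : 0 <= a <= b -> b <= 1 ->
  (forall z, continuous g z) -> (forall z, 0 <= g z) -> RInt g a b <= RInt g 0 1.
Proof.
  intros Hab Hb Hc Hg.
  assert (E1 : forall u v, u <= v -> ex_RInt g u v) by (intros; apply exAB; auto).
  rewrite <- (RInt_Chasles g 0 a 1) by (apply E1; lra).
  rewrite <- (RInt_Chasles g a b 1) by (apply E1; lra).
  assert (0 <= RInt g 0 a) by (apply RInt_ge_0; [lra | apply E1; lra | intros; auto]).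
  assert (0 <= RInt g b 1) by (apply RInt_ge_0; [lra | apply E1; lra | intros; auto]).
  simpl. unfold plus; simpl. lra.
Qed.

Lemma osc (f : R -> R) x y : (forall z, ex_derive f z) -> (forall z, continuous (Derive f) z) ->
  0 <= x <= 1 -> 0 <= y <= 1 ->
  Rabs (f x - f y) <= (1 + RInt (fun z => Derive f z ^ 2) 0 1) / 2.
Proof.
  intros Hd Hc Hx Hy.
  set (g := fun z => /2 + /2 * Derive f z ^ 2).
  assert (Hg : RInt g 0 1 = (1 + RInt (fun z => Derive f z ^ 2) 0 1) / 2).
  { unfold g. rewrite RInt_plusR by (apply exR; intros; cont; auto).
    rewrite RInt_constR, RInt_scalR by (apply exR; intros; cont; auto).
    lra. }
  rewrite <- Hg.
  assert (key : forall a b, 0 <= a <= b -> b <= 1 -> Rabs (f b - f a) <= RInt g 0 1).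
  { intros a b Hab Hb.
    assert (Hi : is_RInt (Derive f) a b (minus (f b) (f a))).
    { apply (is_RInt_derive (V:=R_CompleteNormedModule)).
      intros; apply Derive_correct; auto. intros; auto. }
    assert (Heq : f b - f a = RInt (Derive f) a b).
    { symmetry. apply (is_RInt_unique (V:=R_CompleteNormedModule)) in Hi. rewrite Hi. reflexivity. }
    rewrite Heq.
    eapply Rle_trans. apply abs_RInt_le. lra. eexists; eauto.
    eapply Rle_trans. apply RInt_le with (g := g). lra.
    apply exAB. lra. intros; cont; auto.
    apply exAB. lra. intros; unfold g; cont; auto.
    intros z _. unfold g. pose proof (Rabs_pos (Derive f z)).
    assert (Rabs (Derive f z) ^2 = Derive f z ^2) by apply pow2_abs.
    pose proof (pow2_ge_0 (Rabs (Derive f z) - 1)).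
    replace ((Rabs (Derive f z) - 1)^2) with (Rabs (Derive f z)^2 - 2 * Rabs (Derive f z) + 1) in H1 by ring.
    lra.
    apply RInt_mono_sub; auto. intros; unfold g; cont; auto.
    intros; unfold g. pose proof (pow2_ge_0 (Derive f z)). lra. }
  destruct (Rle_dec y x).
  - apply key; lra.
  - rewrite Rabs_minus_sym. apply key; lra.
Qed.

Lemma supb (f : R -> R) x : (forall z, ex_derive f z) -> (forall z, continuous (Derive f) z) ->
  0 <= x <= 1 ->
  Rabs (f x) <= 1 + (RInt (fun z => f z ^ 2) 0 1 + RInt (fun z => Derive f z ^ 2) 0 1) / 2.
Proof.
  intros Hd Hc Hx.
  set (K := (1 + RInt (fun z => Derive f z ^ 2) 0 1) / 2).
  assert (Hcf : forall z, continuous f z) by (intros; apply (ex_derive_continuous (K:=R_AbsRing) (V:=R_NormedModule)); auto).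
  assert (H1 : RInt (fun _ => Rabs (f x)) 0 1 <= RInt (fun y => /2 + /2 * f y ^ 2 + K) 0 1).
  { apply RInt_le. lra. apply exR; intros; cont. apply exR; intros; cont; auto.
    intros y Hy. pose proof (osc f x y Hd Hc Hx ltac:(lra)).
    fold K in H. pose proof (Rabs_triang_inv (f x) (f y)).
    pose proof (Rabs_pos (f y)).
    assert (Ha : Rabs (f y) ^2 = f y ^2) by apply pow2_abs.
    pose proof (pow2_ge_0 (Rabs (f y) - 1)) as Hq.
    assert (Rabs (f y) <= /2 + /2 * f y ^ 2).
    { rewrite <- Ha. replace ((Rabs (f y) - 1)^2) with (Rabs (f y)^2 - 2 * Rabs (f y) + 1) in Hq by ring. lra. }
    lra. }
  rewrite RInt_constR in H1.
  rewrite RInt_plusR, RInt_plusR, RInt_constR, RInt_constR, RInt_scalR in H1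
    by (apply exR; intros; cont; auto).
  unfold K in H1. lra.
Qed.


Lemma d_mvt (d : R -> R) a b : (forall y, ex_derive d y) -> a < b ->
  exists c, d b - d a = Derive d c * (b - a).
Proof.
  intros Hd Hab. destruct (MVT_cor2 d (Derive d) a b Hab) as [c [Hc _]].
  intros c _. apply is_derive_Reals. apply Derive_correct. auto.
  exists c; auto.
Qed.

Lemma d_lower (d : R -> R) d0 y : (forall y, ex_derive d y) -> (forall y, Derive d y > d0) ->
  0 < d0 -> d 0 = 0 -> 0 <= y -> d0 * y <= d y.
Proof.
  intros Hd Hp Hd0 H0 Hy. destruct (Req_dec y 0). subst; rewrite H0; lra.
  destruct (d_mvt d 0 y Hd ltac:(lra)) as [c Hc]. rewrite H0 in Hc.
  specialize (Hp c). nra.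
Qed.
Lemma d_upper (d : R -> R) d0 y : (forall y, ex_derive d y) -> (forall y, Derive d y > d0) ->
  0 < d0 -> d 0 = 0 -> y <= 0 -> d y <= d0 * y.
Proof.
  intros Hd Hp Hd0 H0 Hy. destruct (Req_dec y 0). subst; rewrite H0; lra.
  destruct (d_mvt d y 0 Hd ltac:(lra)) as [c Hc]. rewrite H0 in Hc.
  specialize (Hp c). nra.
Qed.
Lemma d_mono (d : R -> R) d0 x y : (forall y, ex_derive d y) -> (forall y, Derive d y > d0) ->
  0 < d0 -> x <= y -> d x <= d y.
Proof.
  intros Hd Hp Hd0 Hy. destruct (Req_dec x y). subst; lra.
  destruct (d_mvt d x y Hd ltac:(lra)) as [c Hc].
  specialize (Hp c). nra.
Qed.
Lemma d_sq (d : R -> R) d0 K y : (forall y, ex_derive d y) -> (forall y, Derive d y > d0) ->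
  0 < d0 -> Rabs y <= K -> d y ^ 2 <= d K ^ 2 + d (-K) ^ 2.
Proof.
  intros Hd Hp Hd0 Hy.
  assert (-K <= y <= K) by (unfold Rabs in Hy; destruct (Rcase_abs y); lra).
  pose proof (d_mono d d0 y K Hd Hp Hd0 ltac:(lra)).
  pose proof (d_mono d d0 (-K) y Hd Hp Hd0 ltac:(lra)).
  pose proof (pow2_ge_0 (d K)). pose proof (pow2_ge_0 (d (-K))).
  destruct (Rle_dec 0 (d y)).
  - assert (d y ^2 <= d K ^2) by (simpl; nra). lra.
  - assert (d y ^2 <= d (-K) ^2) by (simpl; nra). lra.
Qed.


Lemma loc_int c T : 0 < c < T -> locally c (fun s => 0 <= s <= T).
Proof.
  intros H. apply (locally_interval _ c 0 T); simpl; try lra.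
  intros; lra.
Qed.

Ltac contJ := cont; try (apply J_x; assumption); try assumption;
  try (match goal with H : forall x, continuous (fun y => Derive _ (_ y _)) x |- _ => apply H end).

Lemma energy (d : R -> R) d0 (fb gb : R -> R) h0 h1 T (p m : R -> R -> R) :
  (forall y, ex_derive d y) -> (forall y, continuous (Derive d) y) ->
  (forall y, Derive d y > d0) -> 0 < d0 ->
  Ck2 2 p -> Ck2 2 m ->
  (forall x t, 0 < x < 1 -> 0 <= t <= T -> dt p x t + dx m x t = fb x) ->
  (forall x t, 0 < x < 1 -> 0 <= t <= T -> dt m x t + dx p x t + d (m x t) = gb x) ->
  (forall t, 0 <= t <= T -> p 0 t = h0 /\ p 1 t = h1) ->
  forall t, 0 <= t <= T ->
  RInt (fun x => dt p x t ^ 2 + dt m x t ^ 2) 0 1 <= RInt (fun x => dt p x 0 ^ 2 + dt m x 0 ^ 2) 0 1.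
Proof.
  intros Hd Hdc Hdp Hd0 Sp Sm Eq1 Eq2 Bc t Ht.
  destruct (C2 p Sp) as (Jp & Jxp & Jtp & Jxxp & Jtxp & Jxtp & Jttp & Exp & Etp & Exxp & Etxp & Extp & Ettp).
  destruct (C2 m Sm) as (Jm & Jxm & Jtm & Jxxm & Jtxm & Jxtm & Jttm & Exm & Etm & Exxm & Etxm & Extm & Ettm).
  set (G := fun s x => dt p x s ^ 2 + dt m x s ^ 2).
  set (E := fun s => RInt (fun x => G s x) 0 1).
  set (dE := fun s => RInt (fun x => Derive (fun s' => G s' x) s) 0 1).
  assert (HdG : forall s x, Derive (fun s' => G s' x) s =
     2 * dt p x s * dt (dt p) x s + 2 * dt m x s * dt (dt m) x s).
  { intros s x. apply is_derive_unique. unfold G. auto_derive.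
    repeat split; auto.
    change (dt (dt p) x s) with (Derive (fun x0 => dt p x x0) s).
    change (dt (dt m) x s) with (Derive (fun x0 => dt m x x0) s). ring. }
  assert (Hder : forall s, is_derive E s (dE s)).
  { intros s. unfold E, dE.
    apply (is_derive_RInt_param G 0 1 s).
    - apply filter_forall. intros s0 x _. unfold G. auto_derive. repeat split; auto.
    - intros x _.
      apply continuity_2d_pt_ext with
        (f := fun u v => 2 * dt p v u * dt (dt p) v u + 2 * dt m v u * dt (dt m) v u).
      intros u v; symmetry; apply HdG.
      apply continuity_2d_pt_plus; repeat apply continuity_2d_pt_mult;
        try apply continuity_2d_pt_const; apply c2d_swap; apply J_c2d; auto.
    - apply filter_forall. intros s0. apply exR. intros x _. unfold G. contJ. }
  assert (Hsm : forall x c, dx (dt m) x c = dt (dx m) x c).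
  { intros x c. apply (Schwarz m x c).
    - exists (mkposreal 1 Rlt_0_1); intros u v _ _.
      split; [apply Exm | split; [apply Etm | split; [apply (Extm u v) | apply (Etxm u v)]]].
    - apply (J_c2d (dx (dt m))); auto.
    - apply (J_c2d (dt (dx m))); auto. }
  assert (Hsp : forall x c, dx (dt p) x c = dt (dx p) x c).
  { intros x c. apply (Schwarz p x c).
    - exists (mkposreal 1 Rlt_0_1); intros u v _ _.
      split; [apply Exp | split; [apply Etp | split; [apply (Extp u v) | apply (Etxp u v)]]].
    - apply (J_c2d (dx (dt p))); auto.
    - apply (J_c2d (dt (dx p))); auto. }
  assert (Hneg : forall c, 0 < c < T -> dE c <= 0).
  { intros c Hc.
    assert (HA : forall x, 0 < x < 1 -> dt (dt p) x c = - dx (dt m) x c).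
    { intros x Hx.
      change (Derive (fun s => dt p x s) c = - dx (dt m) x c).
      transitivity (Derive (fun s => fb x - dx m x s) c).
      - apply Derive_ext_loc. eapply filter_imp; [| apply (loc_int c T Hc)].
        intros s Hs. simpl. pose proof (Eq1 x s Hx Hs). lra.
      - rewrite Hsm. apply is_derive_unique. auto_derive. auto.
        change (dt (dx m) x c) with (Derive (fun s => dx m x s) c). ring. }
    assert (HB : forall x, 0 < x < 1 ->
      dt (dt m) x c = - dx (dt p) x c - Derive d (m x c) * dt m x c).
    { intros x Hx.
      change (Derive (fun s => dt m x s) c = - dx (dt p) x c - Derive d (m x c) * dt m x c).
      transitivity (Derive (fun s => gb x - dx p x s - d (m x s)) c).
      - apply Derive_ext_loc. eapply filter_imp; [| apply (loc_int c T Hc)].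
        intros s Hs. simpl. pose proof (Eq2 x s Hx Hs). lra.
      - rewrite Hsp. apply is_derive_unique. auto_derive. repeat split; auto.
        change (dt (dx p) x c) with (Derive (fun s => dx p x s) c).
        change (dt m x c) with (Derive (fun s => m x s) c). replace (Derive (fun x0 => d x0) (m x c)) with (Derive d (m x c)) by reflexivity. ring. }
    assert (Hb : forall z, z = 0 \/ z = 1 -> dt p z c = 0).
    { intros z Hz. unfold dt.
      destruct (Bc c ltac:(lra)) as [B0 B1].
      rewrite (Derive_ext_loc _ (fun _ => if Req_EM_T z 0 then h0 else h1)).
      apply Derive_const.
      eapply filter_imp; [| apply (loc_int c T Hc)].
      intros s Hs. destruct (Bc s Hs) as [C0 C1].
      destruct Hz; subst; destruct (Req_EM_T _ 0); try lra; auto. }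
    assert (Hw : is_RInt (fun x => dx (dt p) x c * dt m x c + dt p x c * dx (dt m) x c) 0 1
                   (minus (dt p 1 c * dt m 1 c) (dt p 0 c * dt m 0 c))).
    { apply (is_RInt_derive (V:=R_CompleteNormedModule) (fun x => dt p x c * dt m x c)).
      - intros x _. auto_derive. split; auto.
        change (dx (dt p) x c) with (Derive (fun y => dt p y c) x).
        change (dx (dt m) x c) with (Derive (fun y => dt m y c) x). ring.
      - intros x _. contJ. }
    rewrite (Hb 0), (Hb 1) in Hw by lra.
    apply (is_RInt_unique (V:=R_CompleteNormedModule)) in Hw.
    assert (Hw0 : RInt (fun x => dx (dt p) x c * dt m x c + dt p x c * dx (dt m) x c) 0 1 = 0).
    { rewrite Hw. unfold minus, plus, opp; simpl. ring. }
    assert (Hq : forall x, continuous (fun y => Derive d (m y c)) x).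
    { intros x. apply (continuous_comp (fun y => m y c) (Derive d)). apply J_x; auto. auto. }
    unfold dE.
    rewrite (RInt_ext _ (fun x => -2 * (dx (dt p) x c * dt m x c + dt p x c * dx (dt m) x c)
                                  + -2 * (Derive d (m x c) * dt m x c ^ 2))).
    2:{ intros x Hx. rewrite Rmin_left, Rmax_right in Hx by lra.
        rewrite HdG, HA, HB by auto. lra. }
    rewrite RInt_plusR, RInt_scalR, RInt_scalR, Hw0.
    assert (0 <= RInt (fun x => Derive d (m x c) * dt m x c ^ 2) 0 1).
    { apply RInt_ge_0. lra. apply exR; intros; contJ.
      intros x _. specialize (Hdp (m x c)). pose proof (pow2_ge_0 (dt m x c)). nra. }
    lra.
    all: apply exR; intros; contJ. }
  change (E t <= E 0).
  destruct (Req_dec t 0) as [Ht0 | Ht0]. subst; lra.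
  destruct (MVT_cor2 E dE 0 t) as [c [Hc1 Hc2]]. lra.
  intros; apply is_derive_Reals; apply Hder.
  pose proof (Hneg c ltac:(lra)). nra.
Qed.


Lemma abs_int_sq (g : R -> R) : (forall x, 0 <= x <= 1 -> continuous g x) ->
  Rabs (RInt g 0 1) <= /2 + /2 * RInt (fun x => g x ^ 2) 0 1.
Proof.
  intros Hc.
  eapply Rle_trans. apply abs_RInt_le. lra. apply exR; auto.
  eapply Rle_trans. apply RInt_le with (g := fun x => /2 + /2 * g x ^ 2). lra.
  apply exR; intros; cont; auto. apply exR; intros; cont; auto.
  intros x _. pose proof (Rabs_pos (g x)).
  assert (Ha : Rabs (g x) ^2 = g x ^2) by apply pow2_abs.
  pose proof (pow2_ge_0 (Rabs (g x) - 1)) as Hq.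
  rewrite <- Ha. replace ((Rabs (g x) - 1)^2) with (Rabs (g x)^2 - 2 * Rabs (g x) + 1) in Hq by ring. lra.
  rewrite RInt_plusR, RInt_constR, RInt_scalR. lra.
  apply exR; intros; cont; auto. apply exR; intros; cont. apply exR; intros; cont; auto.
Qed.

Lemma sqrt_le1 x Y : x <= Y -> 0 <= Y -> sqrt x <= 1 + Y.
Proof.
  intros H HY. eapply Rle_trans. apply sqrt_le_1_alt; eauto.
  pose proof (pow2_sqrt Y HY). pose proof (sqrt_pos Y).
  pose proof (pow2_ge_0 (sqrt Y - 1)). nra.
Qed.

Definition Cfun (d : R -> R) (d0 a b c P M : R) : R :=
  let E0 := 2*a^2 + 2*M^2 + 3*b^2 + 3*P^2 + 3*(d (1+M^2) ^2 + d (-(1+M^2)) ^2) in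
  let D := 2*a^2 + 2*E0 in
  let K := (1+D)/2 in
  let B := (/2 + /2 * b^2) + (/2 + /2 * E0) + c in
  let S := 2*K + B/d0 in
  3 + 2*E0 + S^2 + D.


Ltac contK := cont; try (apply J_x; assumption);
  try (match goal with H : forall x, continuous ?f x |- continuous _ _ => apply H end);
  try (match goal with |- continuous (fun y => ?g (@?h y)) ?x =>
        apply (continuous_comp h g); [apply J_x; assumption | auto] end).

Theorem lemma2 :
  forall (d : R -> R) (d0 d1 d2 q : R),
    0 < d0 -> 0 <= d1 -> 0 <= d2 -> 0 <= q ->
    (forall y, ex_derive d y) -> (forall y, continuous (Derive d) y) ->
    d 0 = 0 ->
    (forall y, Derive d y > d0) ->
    (forall y, Rabs (Derive d y) <= d1 + d2 * rpow (Rabs y) q) ->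
  exists C : R -> R -> R -> R -> R -> R,
    forall (fb gb : R -> R) (h0 h1 T : R) (p m : R -> R -> R),
      0 < T ->
      smooth2 p -> smooth2 m ->
      (forall x t, 0 < x < 1 -> 0 <= t <= T ->
         dt p x t + dx m x t = fb x) ->
      (forall x t, 0 < x < 1 -> 0 <= t <= T ->
         dt m x t + dx p x t + d (m x t) = gb x) ->
      (forall t, 0 <= t <= T -> p 0 t = h0 /\ p 1 t = h1) ->
      forall t, 0 <= t <= T ->
        L2norm (fun x => dt p x t) + L2norm (fun x => dt m x t)
          + H1norm (fun x => m x t)
        <= C (L2norm fb) (L2norm gb) (Rabs h0 + Rabs h1)
             (H1norm (fun x => p x 0)) (H1norm (fun x => m x 0)).
Proof.
  intros d d0 d1 d2 q Hd0 Hd1 Hd2 Hq Hd Hdc H0 Hdp Hgrow.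
  exists (Cfun d d0).
  intros fb gb h0 h1 T p m HT Sp Sm Eq1 Eq2 Bc t Ht.
  pose proof (Sp 2%nat) as Sp2; pose proof (Sm 2%nat) as Sm2.
  destruct (C2 p Sp2) as (Jp & Jxp & Jtp & Jxxp & Jtxp & Jxtp & Jttp & Exp & Etp & Exxp & Etxp & Extp & Ettp).
  destruct (C2 m Sm2) as (Jm & Jxm & Jtm & Jxxm & Jtxm & Jxtm & Jttm & Exm & Etm & Exxm & Etxm & Extm & Ettm).
  assert (Hdcont : forall y, continuous d y)
    by (intros; apply (ex_derive_continuous (K:=R_AbsRing) (V:=R_NormedModule)); auto).
  set (F := fun x => dt p x 0 + dx m x 0).
  set (G := fun x => dt m x 0 + dx p x 0 + d (m x 0)).
  assert (HFc : forall x, continuous F x) by (intros; unfold F; contK).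
  assert (HGc : forall x, continuous G x) by (intros; unfold G; contK).
  assert (HFe : forall x, 0 < x < 1 -> fb x = F x).
  { intros x Hx. unfold F. rewrite <- (Eq1 x 0 Hx) by lra. reflexivity. }
  assert (HGe : forall x, 0 < x < 1 -> gb x = G x).
  { intros x Hx. unfold G. rewrite <- (Eq2 x 0 Hx) by lra. reflexivity. }
  assert (HF : RInt (fun x => fb x ^ 2) 0 1 = RInt (fun x => F x ^ 2) 0 1).
  { apply RInt_ext. intros x Hx. rewrite Rmin_left, Rmax_right in Hx by lra. rewrite HFe; auto. }
  assert (HG : RInt (fun x => gb x ^ 2) 0 1 = RInt (fun x => G x ^ 2) 0 1).
  { apply RInt_ext. intros x Hx. rewrite Rmin_left, Rmax_right in Hx by lra. rewrite HGe; auto. }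
  assert (nn : forall f : R -> R, (forall x, continuous f x) -> 0 <= RInt (fun x => f x ^ 2) 0 1).
  { intros f Hf. apply RInt_ge_0. lra. apply exR; intros; cont; auto. intros; apply pow2_ge_0. }
  set (a := L2norm fb).
  assert (Ha2 : a ^ 2 = RInt (fun x => F x ^ 2) 0 1).
  { unfold a, L2norm. rewrite HF. apply pow2_sqrt. apply nn; auto. }
  set (b := L2norm gb).
  assert (Hb2 : b ^ 2 = RInt (fun x => G x ^ 2) 0 1).
  { unfold b, L2norm. rewrite HG. apply pow2_sqrt. apply nn; auto. }
  set (P := H1norm (fun x => p x 0)).
  assert (HP2 : P ^ 2 = RInt (fun x => p x 0 ^ 2) 0 1 + RInt (fun x => dx p x 0 ^ 2) 0 1).
  { unfold P, H1norm.
    change (fun x => p x 0 ^ 2 + Derive (fun x0 => p x0 0) x ^ 2) with (fun x => p x 0 ^ 2 + dx p x 0 ^ 2).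
    rewrite <- RInt_plusR by (apply exR; intros; contK).
    apply pow2_sqrt. apply RInt_ge_0. lra. apply exR; intros; contK.
    intros; pose proof (pow2_ge_0 (p x 0)); pose proof (pow2_ge_0 (dx p x 0)); lra. }
  set (M := H1norm (fun x => m x 0)).
  assert (HM2 : M ^ 2 = RInt (fun x => m x 0 ^ 2) 0 1 + RInt (fun x => dx m x 0 ^ 2) 0 1).
  { unfold M, H1norm.
    change (fun x => m x 0 ^ 2 + Derive (fun x0 => m x0 0) x ^ 2) with (fun x => m x 0 ^ 2 + dx m x 0 ^ 2).
    rewrite <- RInt_plusR by (apply exR; intros; contK).
    apply pow2_sqrt. apply RInt_ge_0. lra. apply exR; intros; contK.
    intros; pose proof (pow2_ge_0 (m x 0)); pose proof (pow2_ge_0 (dx m x 0)); lra. }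
  assert (Hp0 : 0 <= RInt (fun x => p x 0 ^ 2) 0 1) by (apply (nn (fun x => p x 0)); intros; contK).
  assert (Hp1 : 0 <= RInt (fun x => dx p x 0 ^ 2) 0 1) by (apply (nn (fun x => dx p x 0)); intros; contK).
  assert (Hm0 : 0 <= RInt (fun x => m x 0 ^ 2) 0 1) by (apply (nn (fun x => m x 0)); intros; contK).
  assert (Hm1 : 0 <= RInt (fun x => dx m x 0 ^ 2) 0 1) by (apply (nn (fun x => dx m x 0)); intros; contK).
  assert (HmK : forall x, 0 <= x <= 1 -> Rabs (m x 0) <= 1 + M ^ 2).
  { intros x Hx.
    assert (Rabs (m x 0) <= 1 + (RInt (fun z => m z 0 ^ 2) 0 1 + RInt (fun z => dx m z 0 ^ 2) 0 1) / 2).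
    { exact (supb (fun y => m y 0) x (fun z => Exm z 0) (fun z => J_x (dx m) 0 z Jxm) Hx). }
    lra. }
  set (DK := d (1 + M ^ 2) ^ 2 + d (-(1 + M ^ 2)) ^ 2).
  set (E0 := 2*a^2 + 2*M^2 + 3*b^2 + 3*P^2 + 3*DK).
  assert (HE0 : RInt (fun x => dt p x 0 ^ 2 + dt m x 0 ^ 2) 0 1 <= E0).
  { eapply Rle_trans.
    apply RInt_le with (g := fun x => 2 * F x ^ 2 + 2 * dx m x 0 ^ 2 + 3 * G x ^ 2
                                      + 3 * dx p x 0 ^ 2 + 3 * DK).
    lra. apply exR; intros; contK. apply exR; intros; contK.
    intros x Hx. cbv beta.
    assert (E1 : dt p x 0 = F x - dx m x 0) by (unfold F; ring).
    assert (E2 : dt m x 0 = G x - dx p x 0 - d (m x 0)) by (unfold G; ring).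
    rewrite E1, E2.
    set (A1 := F x); set (A2 := dx m x 0); set (B1 := G x); set (B2 := dx p x 0); set (B3 := d (m x 0)).
    assert (Hdk : B3 ^ 2 <= DK) by (unfold B3; apply (d_sq d d0); auto; apply HmK; lra).
    assert (I1 : (A1 - A2)^2 + (A1 + A2)^2 = 2 * A1^2 + 2 * A2^2) by ring.
    assert (I2 : 3 * (B1^2 + B2^2 + B3^2) - (B1 - B2 - B3)^2 = (B1+B2)^2 + (B1+B3)^2 + (B2-B3)^2) by ring.
    pose proof (pow2_ge_0 (A1 + A2)) as s1. pose proof (pow2_ge_0 (B1 + B2)) as s2.
    pose proof (pow2_ge_0 (B1 + B3)) as s3. pose proof (pow2_ge_0 (B2 - B3)) as s4.
    clear -I1 I2 Hdk s1 s2 s3 s4. clearbody A1 A2 B1 B2 B3 DK. lra.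
    rewrite !RInt_plusR by (apply exR; intros; contK).
    rewrite !RInt_scalR by (apply exR; intros; contK).
    rewrite RInt_constR. unfold E0. lra. }
  assert (HE0p : 0 <= E0).
  { unfold E0, DK. pose proof (pow2_ge_0 a). pose proof (pow2_ge_0 b). pose proof (pow2_ge_0 M).
    pose proof (pow2_ge_0 P). pose proof (pow2_ge_0 (d (1 + M^2))).
    pose proof (pow2_ge_0 (d (-(1 + M^2)))). lra. }
  assert (HEt := energy d d0 fb gb h0 h1 T p m Hd Hdc Hdp Hd0 Sp2 Sm2 Eq1 Eq2 Bc t Ht).
  rewrite RInt_plusR in HEt by (apply exR; intros; contK).
  set (Iu := RInt (fun x => dt p x t ^ 2) 0 1) in HEt.
  set (Iv := RInt (fun x => dt m x t ^ 2) 0 1) in HEt.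
  assert (HIu : 0 <= Iu) by (apply (nn (fun x => dt p x t)); intros; contK).
  assert (HIv : 0 <= Iv) by (apply (nn (fun x => dt m x t)); intros; contK).
  set (D := 2 * a ^ 2 + 2 * E0).
  assert (HD : RInt (fun x => dx m x t ^ 2) 0 1 <= D).
  { eapply Rle_trans.
    apply RInt_le with (g := fun x => 2 * F x ^ 2 + 2 * dt p x t ^ 2).
    lra. apply exR; intros; contK. apply exR; intros; contK.
    intros x Hx. cbv beta.
    assert (E1 : dx m x t = F x - dt p x t) by (rewrite <- HFe, <- (Eq1 x t Hx Ht); auto; ring).
    rewrite E1. set (A1 := F x); set (A2 := dt p x t).
    assert (I1 : (A1 - A2)^2 + (A1 + A2)^2 = 2 * A1^2 + 2 * A2^2) by ring.
    pose proof (pow2_ge_0 (A1 + A2)). lra.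
    rewrite RInt_plusR, !RInt_scalR by (apply exR; intros; contK).
    fold Iu. unfold D. lra. }
  destruct (Bc t Ht) as [Bt0 Bt1].
  assert (Hpx : RInt (fun x => dx p x t) 0 1 = h1 - h0).
  { assert (Hi : is_RInt (fun x => dx p x t) 0 1 (minus (p 1 t) (p 0 t))).
    { apply (is_RInt_derive (V:=R_CompleteNormedModule) (fun x => p x t)).
      intros; apply Derive_correct; auto. intros; contK. }
    apply (is_RInt_unique (V:=R_CompleteNormedModule)) in Hi. rewrite Hi, Bt0, Bt1.
    unfold minus, plus, opp; simpl. lra. }
  set (Id := RInt (fun x => d (m x t)) 0 1).
  assert (HId : Id = RInt G 0 1 - RInt (fun x => dt m x t) 0 1 - RInt (fun x => dx p x t) 0 1).
  { unfold Id. rewrite <- !RInt_minusR by (apply exR; intros; contK).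
    apply RInt_ext. intros x Hx. rewrite Rmin_left, Rmax_right in Hx by lra.
    rewrite <- HGe by auto. rewrite <- (Eq2 x t Hx Ht). lra. }
  set (B := (/2 + /2 * b ^ 2) + (/2 + /2 * E0) + (Rabs h0 + Rabs h1)).
  assert (HB : Rabs Id <= B).
  { rewrite HId, Hpx.
    pose proof (abs_int_sq G ltac:(intros; auto)) as A1. rewrite <- Hb2 in A1.
    pose proof (abs_int_sq (fun x => dt m x t) ltac:(intros; contK)) as A2. fold Iv in A2.
    pose proof (Rabs_triang h1 (-h0)) as A3. rewrite Rabs_Ropp in A3.
    pose proof (Rabs_triang (RInt G 0 1 - RInt (fun x => dt m x t) 0 1) (- (h1 - h0))) as A4.
    rewrite Rabs_Ropp in A4.
    pose proof (Rabs_triang (RInt G 0 1) (- RInt (fun x => dt m x t) 0 1)) as A5.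
    rewrite Rabs_Ropp in A5.
    unfold B. unfold Rminus in *. assert (HIv2 : RInt (fun x => dt m x t ^ 2) 0 1 <= E0) by (change (Iv <= E0); lra).
    lra. }
  set (K := (1 + D) / 2).
  assert (Hosc : forall x, 0 <= x <= 1 -> Rabs (m x t - m 0 t) <= K).
  { intros x Hx.
    assert (Rabs (m x t - m 0 t) <= (1 + RInt (fun z => dx m z t ^ 2) 0 1) / 2).
    { exact (osc (fun y => m y t) x 0 (fun z => Exm z t) (fun z => J_x (dx m) t z Jxm) Hx ltac:(lra)). }
    unfold K. lra. }
  assert (HKp : 0 <= K).
  { unfold K, D. pose proof (pow2_ge_0 a). lra. }
  assert (Hdiv : d0 * (B / d0) = B) by (field; lra).
  assert (Hmu : Rabs (m 0 t) <= K + B / d0).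
  { set (mu := m 0 t).
    assert (Hb' : forall x, 0 <= x <= 1 -> mu - K <= m x t <= mu + K).
    { intros x Hx. pose proof (Hosc x Hx). fold mu in H.
      unfold Rabs in H; destruct (Rcase_abs (m x t - mu)); lra. }
    destruct (Rle_dec mu K) as [Hle | Hgt]; destruct (Rle_dec (-K) mu) as [Hge | Hlt].
    - unfold Rabs; destruct (Rcase_abs mu).
      + assert (0 <= B / d0).
        { apply Rmult_le_reg_l with d0. lra. rewrite Hdiv. pose proof (Rabs_pos Id). lra. }
        lra.
      + assert (0 <= B / d0).
        { apply Rmult_le_reg_l with d0. lra. rewrite Hdiv. pose proof (Rabs_pos Id). lra. }
        lra.
    -
      assert (Hup : Id <= d0 * (mu + K)).
      { unfold Id. rewrite <- (RInt_constR (d0 * (mu + K))).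
        apply RInt_le. lra. apply exR; intros; contK. apply exR; intros; contK.
        intros x Hx. pose proof (Hb' x ltac:(lra)).
        pose proof (d_upper d d0 (m x t) Hd Hdp Hd0 H0 ltac:(lra)). nra. }
      assert (- (mu + K) <= B / d0).
      { apply Rmult_le_reg_l with d0. lra. rewrite Hdiv.
        pose proof (Rle_abs (- Id)). rewrite Rabs_Ropp in H. lra. }
      rewrite Rabs_left by lra. lra.
    -
      assert (Hlow : d0 * (mu - K) <= Id).
      { unfold Id. rewrite <- (RInt_constR (d0 * (mu - K))).
        apply RInt_le. lra. apply exR; intros; contK. apply exR; intros; contK.
        intros x Hx. pose proof (Hb' x ltac:(lra)).
        pose proof (d_lower d d0 (m x t) Hd Hdp Hd0 H0 ltac:(lra)). nra. }
      assert (mu - K <= B / d0).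
      { apply Rmult_le_reg_l with d0. lra. rewrite Hdiv.
        pose proof (Rle_abs Id). lra. }
      rewrite Rabs_right by lra. lra.
    - exfalso; lra. }
  set (S := 2 * K + B / d0).
  assert (HS : RInt (fun x => m x t ^ 2) 0 1 <= S ^ 2).
  { rewrite <- (RInt_constR (S ^ 2)).
    apply RInt_le. lra. apply exR; intros; contK. apply exR; intros; contK.
    intros x Hx. pose proof (Hosc x ltac:(lra)).
    assert (Hm : Rabs (m x t) <= S).
    { pose proof (Rabs_triang (m x t - m 0 t) (m 0 t)). 
      replace (m x t - m 0 t + m 0 t) with (m x t) in H1 by ring. unfold S. lra. }
    rewrite <- (pow2_abs (m x t)). apply pow_incr. split; auto. apply Rabs_pos. }
  assert (Hm2 : 0 <= RInt (fun x => m x t ^ 2) 0 1) by (apply (nn (fun x => m x t)); intros; contK).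
  assert (Hdm2 : 0 <= RInt (fun x => dx m x t ^ 2) 0 1) by (apply (nn (fun x => dx m x t)); intros; contK).
  unfold Cfun. cbv zeta. fold DK. fold E0. fold D. fold K. fold B. fold S.
  assert (L1 : L2norm (fun x => dt p x t) <= 1 + E0).
  { unfold L2norm. apply sqrt_le1; auto. change (Iu <= E0). lra. }
  assert (L2 : L2norm (fun x => dt m x t) <= 1 + E0).
  { unfold L2norm. apply sqrt_le1; auto. change (Iv <= E0). lra. }
  assert (L3 : H1norm (fun x => m x t) <= 1 + (S ^ 2 + D)).
  { unfold H1norm.
    change (fun x => m x t ^ 2 + Derive (fun x0 => m x0 t) x ^ 2) with (fun x => m x t ^ 2 + dx m x t ^ 2).
    apply sqrt_le1. rewrite RInt_plusR by (apply exR; intros; contK). lra.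
    pose proof (pow2_ge_0 S). lra. }
  lra.
Qed.
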